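(* Let $n\ge 2$ and let $P_n(x_0)$ be a $\Pi^0_{2n-3}$-predicate on $\mathbb N_+$. Then for each $2\le i<n$ there is a $\Pi^0_{2i-3}$-predicate $P_i(x_0,x_1,y_1,x_2,y_2,\dots,x_{n-i},y_{n-i})$ on $\mathbb N_+$ such that, for every $2\le i<n$, writing $\overline x=(x_0,x_1,y_1,\dots,x_{n-i-1},y_{n-i-1})$ and letting all quantifiers range over $\mathbb N_+$: (i) $P_{i+1}(\overline x)$ is logically equivalent to $\forall x_{n-i}\,\exists y_{n-i}: P_i(\overline x,x_{n-i},y_{n-i})$; (ii) if $\forall y_{n-i}:\neg P_i(\overline x,x_{n-i},y_{n-i})$, then $\forall x'_{n-i}\ge x_{n-i}\ \forall y_{n-i}:\neg P_i(\overline x,x'_{n-i},y_{n-i})$.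
   Context: $\mathbb N_+=\{1,2,\dots\}$. $\Pi^0_m$ denotes the $m$-th universal level of the arithmetical hierarchy. *)

(* Defs.v *)
From mathcomp Require Import all_boot.
Set Implicit Arguments. Unset Strict Implicit. Unset Printing Implicit Defensive.

Inductive term : Type :=
| TVar  : nat -> term
| TZero : term
| TSucc : term -> term
| TAdd  : term -> term -> term
| TMul  : term -> term -> term.

Inductive form : Type :=
| FEq  : term -> term -> form
| FLt  : term -> term -> form
| FNeg : form -> form
| FAnd : form -> form -> form
| FOr  : form -> form -> form
| FImp : form -> form -> form
| FBAll : nat -> term -> form -> form
| FBEx  : nat -> term -> form -> form
| FAll : nat -> form -> form
| FEx  : nat -> form -> form.

Fixpoint teval (e : nat -> nat) (t : term) : nat :=
  match t with
  | TVar k => e k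
  | TZero => 0
  | TSucc t => (teval e t).+1
  | TAdd t u => teval e t + teval e u
  | TMul t u => teval e t * teval e u
  end.

Definition upd (e : nat -> nat) (x a : nat) : nat -> nat :=
  fun k => if k == x then a else e k.

Fixpoint sat (e : nat -> nat) (f : form) : Prop :=
  match f with
  | FEq t u => teval e t = teval e u
  | FLt t u => teval e t < teval e u
  | FNeg f => ~ sat e f
  | FAnd f g => sat e f /\ sat e g
  | FOr f g => sat e f \/ sat e g
  | FImp f g => sat e f -> sat e g
  | FBAll x t f => forall a, a < teval e t -> sat (upd e x a) f
  | FBEx x t f => exists2 a, a < teval e t & sat (upd e x a) f
  | FAll x f => forall a, sat (upd e x a) f
  | FEx x f => exists a, sat (upd e x a) f
  end.

Fixpoint delta0 (f : form) : Prop :=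
  match f with
  | FEq _ _ | FLt _ _ => True
  | FNeg f => delta0 f
  | FAnd f g | FOr f g | FImp f g => delta0 f /\ delta0 g
  | FBAll _ _ f | FBEx _ _ f => delta0 f
  | FAll _ _ | FEx _ _ => False
  end.

Inductive isSigma : nat -> form -> Prop :=
| Sigma0 f : delta0 f -> isSigma 0 f
| SigmaPi m f : isPi m f -> isSigma m.+1 f
| SigmaEx m x f : isSigma m.+1 f -> isSigma m.+1 (FEx x f)
with isPi : nat -> form -> Prop :=
| Pi0 f : delta0 f -> isPi 0 f
| PiSigma m f : isSigma m f -> isPi m.+1 f
| PiAll m x f : isPi m.+1 f -> isPi m.+1 (FAll x f).

(* A k-ary predicate on N_+ is represented by P : seq nat -> Prop, only its values
   on sequences of length k with all entries positive being relevant. *)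
Definition positive_args (k : nat) (v : seq nat) : Prop :=
  size v = k /\ all (fun a => 0 < a) v.

Definition Pi0_pred (m k : nat) (P : seq nat -> Prop) : Prop :=
  exists f : form, isPi m f /\
    forall v : seq nat, positive_args k v -> (P v <-> sat (fun j => nth 0 v j) f).

(* Main.v *)
Require Import Defs.
From mathcomp Require Import all_boot zify.
From Stdlib Require Import Classical FunctionalExtensionality ClassicalEpsilon.
Set Implicit Arguments. Unset Strict Implicit. Unset Printing Implicit Defensive.

Fixpoint tmv (t : term) : nat :=
  match t with
  | TVar k => k.+1 | TZero => 0 | TSucc t => tmv t
  | TAdd t u => maxn (tmv t) (tmv u) | TMul t u => maxn (tmv t) (tmv u) end.

Fixpoint mv (f : form) : nat :=
  match f with
  | FEq t u => maxn (tmv t) (tmv u) | FLt t u => maxn (tmv t) (tmv u)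
  | FNeg f => mv f
  | FAnd f g => maxn (mv f) (mv g) | FOr f g => maxn (mv f) (mv g)
  | FImp f g => maxn (mv f) (mv g)
  | FBAll x t f => maxn x.+1 (maxn (tmv t) (mv f))
  | FBEx x t f => maxn x.+1 (maxn (tmv t) (mv f))
  | FAll x f => maxn x.+1 (mv f) | FEx x f => maxn x.+1 (mv f) end.

Fixpoint qc (f : form) : nat :=
  match f with
  | FEq _ _ | FLt _ _ => 0
  | FNeg f => qc f
  | FAnd f g | FOr f g | FImp f g => qc f + qc g
  | FBAll _ _ f | FBEx _ _ f => qc f
  | FAll _ f | FEx _ f => (qc f).+1 end.

Fixpoint tren (s : nat -> nat) (t : term) : term :=
  match t with
  | TVar k => TVar (s k) | TZero => TZero | TSucc t => TSucc (tren s t)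
  | TAdd t u => TAdd (tren s t) (tren s u) | TMul t u => TMul (tren s t) (tren s u) end.

Fixpoint sren (s : nat -> nat) (f : form) : form :=
  match f with
  | FEq t u => FEq (tren s t) (tren s u) | FLt t u => FLt (tren s t) (tren s u)
  | FNeg f => FNeg (sren s f)
  | FAnd f g => FAnd (sren s f) (sren s g) | FOr f g => FOr (sren s f) (sren s g)
  | FImp f g => FImp (sren s f) (sren s g)
  | FBAll x t f => FBAll (s x) (tren s t) (sren s f)
  | FBEx x t f => FBEx (s x) (tren s t) (sren s f)
  | FAll x f => FAll (s x) (sren s f) | FEx x f => FEx (s x) (sren s f) end.

Lemma updE e x a : upd e x a x = a.
Proof. by rewrite /upd eqxx. Qed.
Lemma upd_other e x a y : y != x -> upd e x a y = e y.
Proof. by rewrite /upd => /negbTE ->. Qed.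
Lemma updC e x y a b : x != y -> upd (upd e x a) y b = upd (upd e y b) x a.
Proof.
move=> xy; apply: functional_extensionality => j; rewrite /upd.
case: (eqVneq j y) => [->|]; last by [].
by rewrite eq_sym (negbTE xy).
Qed.

Lemma teval_agree t e1 e2 : (forall j, j < tmv t -> e1 j = e2 j) -> teval e1 t = teval e2 t.
Proof.
elim: t => //= [k|t IH|t IHt u IHu|t IHt u IHu] H.
- by apply: H.
- by rewrite IH.
- rewrite IHt ?IHu // => j hj; apply: H; lia.
- rewrite IHt ?IHu // => j hj; apply: H; lia.
Qed.

Lemma upd_agree (e1 e2 : nat -> nat) x a N :
  (forall j, j < N -> e1 j = e2 j) -> forall j, j < N -> upd e1 x a j = upd e2 x a j.
Proof. by move=> H j hj; rewrite /upd; case: (j == x) => //; apply: H. Qed.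

Lemma sat_agree f : forall e1 e2, (forall j, j < mv f -> e1 j = e2 j) -> (sat e1 f <-> sat e2 f).
Proof.
elim: f => /=.
- move=> t u e1 e2 H; rewrite (@teval_agree t e1 e2) ?(@teval_agree u e1 e2) //;
  move=> j hj; apply: H; lia.
- move=> t u e1 e2 H; rewrite (@teval_agree t e1 e2) ?(@teval_agree u e1 e2) //;
  move=> j hj; apply: H; lia.
- move=> f IH e1 e2 H; have := IH e1 e2 H; tauto.
- move=> f IHf g IHg e1 e2 H.
  have h1 := IHf e1 e2 (fun j hj => H j ltac:(lia)).
  have h2 := IHg e1 e2 (fun j hj => H j ltac:(lia)). tauto.
- move=> f IHf g IHg e1 e2 H.
  have h1 := IHf e1 e2 (fun j hj => H j ltac:(lia)).
  have h2 := IHg e1 e2 (fun j hj => H j ltac:(lia)). tauto.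
- move=> f IHf g IHg e1 e2 H.
  have h1 := IHf e1 e2 (fun j hj => H j ltac:(lia)).
  have h2 := IHg e1 e2 (fun j hj => H j ltac:(lia)). tauto.
- move=> x t f IH e1 e2 H.
  rewrite (@teval_agree t e1 e2); last by move=> j hj; apply: H; lia.
  have H' : forall j, j < mv f -> e1 j = e2 j by move=> j hj; apply: H; lia.
  split=> K a ha.
  + by apply/(IH _ _ (upd_agree x a H')); apply: K.
  + by apply/(IH _ _ (upd_agree x a H')); apply: K.
- move=> x t f IH e1 e2 H.
  rewrite (@teval_agree t e1 e2); last by move=> j hj; apply: H; lia.
  have H' : forall j, j < mv f -> e1 j = e2 j by move=> j hj; apply: H; lia.
  split=> -[a ha K]; exists a => //; first by apply/(IH _ _ (upd_agree x a H')).
  by apply/(IH _ _ (upd_agree x a H')).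
- move=> x f IH e1 e2 H.
  have H' : forall j, j < mv f -> e1 j = e2 j by move=> j hj; apply: H; lia.
  split=> K a; first by apply/(IH _ _ (upd_agree x a H')).
  by apply/(IH _ _ (upd_agree x a H')).
- move=> x f IH e1 e2 H.
  have H' : forall j, j < mv f -> e1 j = e2 j by move=> j hj; apply: H; lia.
  split=> -[a K]; exists a; first by apply/(IH _ _ (upd_agree x a H')).
  by apply/(IH _ _ (upd_agree x a H')).
Qed.

Lemma sat_indep f e C v : mv f <= C -> (sat (upd e C v) f <-> sat e f).
Proof.
move=> hC; apply: sat_agree => j hj; rewrite upd_other //; apply/eqP; lia.
Qed.

Lemma teval_ren s e t : teval e (tren s t) = teval (e \o s) t.
Proof. by elim: t => //= [t ->|t -> u ->|t -> u ->]. Qed.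

Lemma upd_ren (s : nat -> nat) e x a : injective s -> (upd e (s x) a) \o s = upd (e \o s) x a.
Proof.
move=> inj; apply: functional_extensionality => j; rewrite /upd /=.
by rewrite (inj_eq inj).
Qed.

Lemma sat_ren s (inj : injective s) f : forall e, sat e (sren s f) <-> sat (e \o s) f.
Proof.
elim: f => /=.
- by move=> t u e; rewrite !teval_ren.
- by move=> t u e; rewrite !teval_ren.
- move=> f IH e; have := IH e; tauto.
- move=> f IHf g IHg e; have := IHf e; have := IHg e; tauto.
- move=> f IHf g IHg e; have := IHf e; have := IHg e; tauto.
- move=> f IHf g IHg e; have := IHf e; have := IHg e; tauto.
- move=> x t f IH e; rewrite teval_ren.
  split=> K a ha; have := K a ha; by rewrite IH upd_ren.
- move=> x t f IH e; rewrite teval_ren.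
  split=> -[a ha K]; exists a => //; move: K; by rewrite IH upd_ren.
- move=> x f IH e.
  split=> K a; have := K a; by rewrite IH upd_ren.
- move=> x f IH e.
  split=> -[a K]; exists a; move: K; by rewrite IH upd_ren.
Qed.

Lemma qc_ren s f : qc (sren s f) = qc f.
Proof. elim: f => /= *; congruence. Qed.

Lemma delta0_ren s f : delta0 f -> delta0 (sren s f).
Proof. elim: f => //= [f IHf g IHg|f IHf g IHg|f IHf g IHg]; intuition. Qed.

Scheme isPi_mut := Induction for isPi Sort Prop
with isSigma_mut := Induction for isSigma Sort Prop.

Lemma ren_class s : (forall m f, isPi m f -> isPi m (sren s f)) /\
                    (forall m f, isSigma m f -> isSigma m (sren s f)).
Proof.
split.
- move=> m f h; refine (@isPi_mut (fun m f _ => isPi m (sren s f)) (fun m f _ => isSigma m (sren s f)) _ _ _ _ _ _ m f h); clear m f h.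
  + by move=> f d; apply: Pi0; apply: delta0_ren.
  + by move=> m f _ h; apply: PiSigma.
  + by move=> m x f _ h; apply: PiAll.
  + by move=> f d; apply: Sigma0; apply: delta0_ren.
  + by move=> m f _ h; apply: SigmaPi.
  + by move=> m x f _ h; apply: SigmaEx.
- move=> m f h; refine (@isSigma_mut (fun m f _ => isPi m (sren s f)) (fun m f _ => isSigma m (sren s f)) _ _ _ _ _ _ m f h); clear m f h.
  + by move=> f d; apply: Pi0; apply: delta0_ren.
  + by move=> m f _ h; apply: PiSigma.
  + by move=> m x f _ h; apply: PiAll.
  + by move=> f d; apply: Sigma0; apply: delta0_ren.
  + by move=> m f _ h; apply: SigmaPi.
  + by move=> m x f _ h; apply: SigmaEx.
Qed.

Definition swap (x z j : nat) : nat := if j == x then z else if j == z then x else j.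

Lemma swapK x z : involutive (swap x z).
Proof. move=> j; rewrite /swap; repeat case: eqP; congruence. Qed.

Lemma swap_inj x z : injective (swap x z).
Proof. exact: (can_inj (swapK x z)). Qed.

Lemma swap_sat x z g e c : mv g <= z ->
  (sat (upd e x c) g <-> sat (upd e z c) (sren (swap x z) g)).
Proof.
move=> hz; rewrite sat_ren; last exact: swap_inj.
apply: sat_agree => j hj.
rewrite /= /swap /upd.
have jz : (j == z) = false by apply/eqP; lia.
case: (j =P x) => [jx|njx]; first by rewrite eqxx.
by rewrite jz jz.
Qed.

Lemma isPi0_inv f : isPi 0 f -> delta0 f.
Proof. by move=> h; inversion h. Qed.
Lemma isSigma0_inv f : isSigma 0 f -> delta0 f.
Proof. by move=> h; inversion h. Qed.
Lemma isPiS_inv k f : isPi k.+1 f -> isSigma k f \/ exists x g, f = FAll x g /\ isPi k.+1 g.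
Proof. move=> h; inversion h; subst; [left | right; exists x, f0]; by eauto. Qed.
Lemma isSigmaS_inv k f : isSigma k.+1 f -> isPi k f \/ exists x g, f = FEx x g /\ isSigma k.+1 g.
Proof. move=> h; inversion h; subst; [left | right; exists x, f0]; by eauto. Qed.

Lemma collect B (P : nat -> nat -> Prop) :
  (forall a, a < B -> exists c, P a c) -> exists C, forall a, a < B -> exists2 c, c < C & P a c.
Proof.
elim: B => [|B IH] H; first by exists 0.
have [C1 H1] : exists C, forall a, a < B -> exists2 c, c < C & P a c.
  by apply: IH => a ha; apply: H; lia.
have [c0 H0] := H B (ltnSn B).
exists (maxn C1 c0.+1) => a ha.
case: (ltnP a B) => hab.
- have [c hc Pc] := H1 a hab; exists c => //; lia.
- have -> : a = B by lia. exists c0 => //; lia.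
Qed.

Lemma L1 B (P : nat -> nat -> Prop) :
  (exists2 a, a < B & forall c, P a c) <-> (forall C, exists2 a, a < B & forall c, c < C -> P a c).
Proof.
split; first by case=> a ha H C; exists a => // c _; apply: H.
move=> H; apply: NNPP => hn.
have H2 : forall a, a < B -> exists c, ~ P a c.
  move=> a ha; apply: NNPP => hne; apply: hn; exists a => // c.
  by apply: NNPP => hp; apply: hne; exists c.
have [C0 HC] := collect H2.
have [a ha K] := H C0. have [c hc nP] := HC a ha. by apply: nP; apply: K.
Qed.

Lemma L2 B (P : nat -> nat -> Prop) :
  (forall a, a < B -> exists c, P a c) <-> (exists C, forall a, a < B -> exists2 c, c < C & P a c).
Proof.
split; first exact: collect.
by case=> C H a ha; have [c _ Pc] := H a ha; exists c.
Qed.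

Lemma L3 (R : nat -> nat -> Prop) : (forall a y y', y <= y' -> R a y -> R a y') ->
  ((exists a y, R a y) <-> exists y, exists2 a, a < y & R a y).
Proof.
move=> mono; split.
- case=> a [y H]; exists (maxn y a.+1); exists a; first lia.
  by apply: mono H; lia.
- by case=> y [a _ H]; exists a, y.
Qed.

Lemma L4 (R : nat -> nat -> nat -> Prop) :
  (forall a x y x' y', x' <= x -> y <= y' -> R a x y -> R a x' y') ->
  ((forall a x, exists y, R a x y) <-> forall x, exists y, forall a, a < x -> R a x y).
Proof.
move=> mono; split.
- move=> H x. have [C HC] := collect (fun a (_ : a < x) => H a x).
  exists C => a ha; have [y hy Ry] := HC a ha; by apply: mono Ry; lia.
- move=> H a x; have [y Hy] := H (maxn x a.+1); exists y.
  by apply: (mono a (maxn x a.+1) y); [lia|lia|apply: Hy; lia].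
Qed.

Lemma L5 (R : nat -> nat -> Prop) :
  (forall x y x' y', x' <= x -> y <= y' -> R x y -> R x' y') ->
  ((forall x, exists y, R x y) <-> forall x, 0 < x -> exists2 y, 0 < y & R x y).
Proof.
move=> mono; split.
- move=> H x _; have [y Hy] := H x; exists y.+1 => //; by apply: mono Hy.
- move=> H x; have [y _ Hy] := H x.+1 (ltn0Sn x); exists y; by apply: mono Hy.
Qed.

Definition BAs f f' u b := forall e, sat e f' <-> (forall a, a < e b -> sat (upd e u a) f).
Definition BEs f f' u b := forall e, sat e f' <-> (exists2 a, a < e b & sat (upd e u a) f).

Definition CoreP f := forall m u b,
 (isPi m f -> (exists2 f', isPi m f' /\ qc f' <= qc f & BAs f f' u b) /\
              (exists2 f', isPi m f' /\ qc f' <= qc f & BEs f f' u b)) /\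
 (isSigma m f -> (exists2 f', isSigma m f' /\ qc f' <= qc f & BAs f f' u b) /\
                 (exists2 f', isSigma m f' /\ qc f' <= qc f & BEs f f' u b)).

Lemma neq_lt a b : a < b -> a != b.
Proof. by move=> h; apply/eqP; lia. Qed.
Lemma neq_gt a b : b < a -> a != b.
Proof. by move=> h; apply/eqP; lia. Qed.

Lemma core_aux N : forall f, qc f < N -> CoreP f.
Proof.
elim: N => [//|N IH] f hf m; elim: m => [|k IHk] u b.
  split=> [/isPi0_inv d|/isSigma0_inv d]; split.
  - by exists (FBAll u (TVar b) f); [split; [apply: Pi0|] | move=> e].
  - by exists (FBEx u (TVar b) f); [split; [apply: Pi0|] | move=> e].
  - by exists (FBAll u (TVar b) f); [split; [apply: Sigma0|] | move=> e].
  - by exists (FBEx u (TVar b) f); [split; [apply: Sigma0|] | move=> e].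
split.
- move/isPiS_inv => [hs|[x [g [Ef hg]]]]; last subst f.
    have [_ /(_ hs) [[f1 [p1 q1] s1] [f2 [p2 q2] s2]]] := IHk u b.
    by split; [exists f1 => //; split => //; apply: PiSigma | exists f2 => //; split => //; apply: PiSigma].
  have [z [hz1 hz2 hz3 hz4]] : exists z, [/\ mv g <= z, x < z, u < z & b < z].
    by exists (maxn (maxn x.+1 (mv g)) (maxn u.+1 b.+1)); split; lia.
  have zu := neq_gt hz3; have uz := neq_lt hz3; have bz := neq_lt hz4.
  have pg' : isPi k.+1 (sren (swap x z) g) := (ren_class _).1 _ _ hg.
  have qeq := qc_ren (swap x z) g.
  have key : forall e0, (forall c, sat (upd e0 x c) g) <-> forall c, sat (upd e0 z c) (sren (swap x z) g).
    move=> e0; split=> H c; [apply/(@swap_sat x z g e0 c hz1) | apply/(@swap_sat x z g e0 c hz1)]; exact: H.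
  move: pg' qeq key; move: (sren (swap x z) g) => g' pg' qeq key.
  have qg' : qc g' < N by move: hf => /= hf; lia.
  split.
  + have [/(_ pg') [[g2 [p2 q2] s2] _] _] := IH g' qg' k.+1 u b.
    exists (FAll z g2); first by split; [apply: PiAll | rewrite /=; lia].
    move=> e /=; split=> H.
    * move=> a ha; apply/key => c. have := (s2 _).1 (H c) a.
      rewrite upd_other // => /(_ ha). by rewrite updC.
    * move=> c; apply/s2 => a. rewrite upd_other // => ha.
      have := (key (upd e u a)).1 (H a ha) c. by rewrite updC.
  + have [C [hC1 hC2 hC3 hC4]] : exists C, [/\ mv g' <= C, z < C, u < C & b < C].
      by exists (maxn (maxn z.+1 (mv g')) (maxn u.+1 b.+1)); split; lia.
    have Cu := neq_gt hC3; have Cz := neq_gt hC2; have bC := neq_lt hC4.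
    have [/(_ pg') [[g3 [p3 q3] s3] _] _] := IH g' qg' k.+1 z C.
    have qg3 : qc g3 < N by lia.
    have [/(_ p3) [_ [g4 [p4 q4] s4]] _] := IH g3 qg3 k.+1 u b.
    exists (FAll C g4); first by split; [apply: PiAll | rewrite /=; lia].
    move=> e /=.
    have E3 : forall a c Cv, upd (upd (upd e C Cv) u a) z c = upd (upd (upd e u a) z c) C Cv.
      by move=> a c Cv; rewrite (updC _ _ _ Cu) (updC _ _ _ Cz).
    have E4 : forall a Cv, upd (upd e C Cv) u a C = Cv.
      by move=> a Cv; rewrite upd_other // updE.
    have E1 : forall Cv, sat (upd e C Cv) g4 <->
       exists2 a, a < e b & forall c, c < Cv -> sat (upd (upd e u a) z c) g'.
      move=> Cv; rewrite s4 upd_other //; split=> -[a ha H]; exists a => //.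
      - move=> c hc; have := (s3 _).1 H c.
        rewrite E4 E3 sat_indep //; by move/(_ hc).
      - apply/s3 => c; rewrite E4 => hc; rewrite E3 sat_indep //; exact: H.
    split.
    * move=> H.
      have := (L1 (e b) (fun a c => sat (upd (upd e u a) z c) g')).2 (fun Cv => (E1 Cv).1 (H Cv)).
      by case=> a ha Ha; exists a => //; apply/key.
    * case=> a ha Ha Cv; apply/E1.
      apply: ((L1 (e b) (fun a c => sat (upd (upd e u a) z c) g')).1).
      by exists a => //; apply/key.
- move/isSigmaS_inv => [hp|[x [g [Ef hg]]]]; last subst f.
    have [/(_ hp) [[f1 [p1 q1] s1] [f2 [p2 q2] s2]] _] := IHk u b.
    by split; [exists f1 => //; split => //; apply: SigmaPi | exists f2 => //; split => //; apply: SigmaPi].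
  have [z [hz1 hz2 hz3 hz4]] : exists z, [/\ mv g <= z, x < z, u < z & b < z].
    by exists (maxn (maxn x.+1 (mv g)) (maxn u.+1 b.+1)); split; lia.
  have zu := neq_gt hz3; have uz := neq_lt hz3; have bz := neq_lt hz4.
  have pg' : isSigma k.+1 (sren (swap x z) g) := (ren_class _).2 _ _ hg.
  have qeq := qc_ren (swap x z) g.
  have key : forall e0, (exists c, sat (upd e0 x c) g) <-> exists c, sat (upd e0 z c) (sren (swap x z) g).
    move=> e0; split=> -[c H]; exists c; [apply/(@swap_sat x z g e0 c hz1) | apply/(@swap_sat x z g e0 c hz1)]; exact: H.
  move: pg' qeq key; move: (sren (swap x z) g) => g' pg' qeq key.
  have qg' : qc g' < N by move: hf => /= hf; lia.
  split.
  + have [C [hC1 hC2 hC3 hC4]] : exists C, [/\ mv g' <= C, z < C, u < C & b < C].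
      by exists (maxn (maxn z.+1 (mv g')) (maxn u.+1 b.+1)); split; lia.
    have Cu := neq_gt hC3; have Cz := neq_gt hC2; have bC := neq_lt hC4.
    have [_ /(_ pg') [_ [g3 [p3 q3] s3]]] := IH g' qg' k.+1 z C.
    have qg3 : qc g3 < N by lia.
    have [_ /(_ p3) [[g4 [p4 q4] s4] _]] := IH g3 qg3 k.+1 u b.
    exists (FEx C g4); first by split; [apply: SigmaEx | rewrite /=; lia].
    move=> e /=.
    have E3 : forall a c Cv, upd (upd (upd e C Cv) u a) z c = upd (upd (upd e u a) z c) C Cv.
      by move=> a c Cv; rewrite (updC _ _ _ Cu) (updC _ _ _ Cz).
    have E4 : forall a Cv, upd (upd e C Cv) u a C = Cv.
      by move=> a Cv; rewrite upd_other // updE.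
    have E1 : forall Cv, sat (upd e C Cv) g4 <->
       forall a, a < e b -> exists2 c, c < Cv & sat (upd (upd e u a) z c) g'.
      move=> Cv; rewrite s4 upd_other //; split=> H a ha.
      - have [c hc Hc] := (s3 _).1 (H a ha).
        by exists c; move: hc Hc; rewrite E4 E3 sat_indep.
      - apply/s3; have [c hc Hc] := H a ha; exists c; first by rewrite E4.
        by rewrite E3 sat_indep.
    split.
    * case=> Cv H a ha; apply/key.
      have := (L2 (e b) (fun a c => sat (upd (upd e u a) z c) g')).2.
      apply => //; exists Cv; exact/E1.
    * move=> H.
      have [Cv HC] := (L2 (e b) (fun a c => sat (upd (upd e u a) z c) g')).1
         (fun a ha => (key _).1 (H a ha)).
      by exists Cv; apply/E1.
  + have [_ /(_ pg') [_ [g2 [p2 q2] s2]]] := IH g' qg' k.+1 u b.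
    exists (FEx z g2); first by split; [apply: SigmaEx | rewrite /=; lia].
    move=> e /=; split.
    * case=> c /s2 [a]; rewrite upd_other // => ha Ha.
      exists a => //; apply/key; exists c; move: Ha; by rewrite updC.
    * case=> a ha /key [c Hc]; exists c; apply/s2; exists a; first by rewrite upd_other.
      by rewrite updC.
Qed.

Lemma core f : CoreP f.
Proof. exact: (@core_aux (qc f).+1). Qed.

Lemma expart k S : isSigma k S -> forall m, k = m.+1 -> forall X Y, X != Y -> mv S <= X -> mv S <= Y ->
  exists H, [/\ isPi m H, (forall e, sat e S <-> exists y, sat (upd e Y y) H),
     (forall e y y', y <= y' -> sat (upd e Y y) H -> sat (upd e Y y') H) &
     (forall e a, sat (upd e X a) H <-> sat e H)].
Proof.
elim => [f d m Em|m0 f hp m [<-]|m0 w S1 hS1 IH m [Em]] X Y XY hX hY.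
- by case: Em.
- have Ind : forall Z, mv f <= Z -> forall e y, sat (upd e Z y) f <-> sat e f.
    by move=> Z hZ e y; apply: sat_indep.
  exists f; split => //.
  + move=> e; split=> [H|[y]]; first by exists 0; apply/(Ind Y hY).
    by move/(Ind Y hY).
  + by move=> e y y' _ /(Ind Y hY) H; apply/(Ind Y hY).
  + by move=> e a; apply: Ind.
- have hX1 : mv S1 <= X by move: hX => /= hX; lia.
  have hY1 : mv S1 <= Y by move: hY => /= hY; lia.
  have wX : w != X by apply/eqP; move: hX => /= hX; lia.
  have wY : w != Y by apply/eqP; move: hY => /= hY; lia.
  have Yw : Y != w by rewrite eq_sym.
  have YX : Y != X by rewrite eq_sym.
  have Xw : X != w by rewrite eq_sym.
  have [H1 [p1 s1 mo1 in1]] := IH m (congr1 succn Em) X Y XY hX1 hY1.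
  have [_ [H [pH _] sH]] := (core H1 m w Y).1 p1.
  have EH : forall e y, sat (upd e Y y) H <-> exists2 a, a < y & sat (upd (upd e w a) Y y) H1.
    move=> e y; rewrite sH updE; split=> -[a ha Ha]; exists a => //; move: Ha.
    + by rewrite updC.
    + by rewrite updC.
  exists H; split => //.
  + move=> e /=; split.
    * case=> a /s1 [y Hy].
      have mono : forall a y y', y <= y' -> sat (upd (upd e w a) Y y) H1 -> sat (upd (upd e w a) Y y') H1.
        by move=> a' y0 y0' h; apply: mo1.
      have [y' [a' ha' Ha']] := (L3 mono).1 (ex_intro _ a (ex_intro _ y Hy)).
      by exists y'; apply/EH; exists a'.
    * case=> y /EH [a ha Ha]; exists a; apply/s1; by exists y.
  + move=> e y y' hy /EH [a ha Ha]; apply/EH; exists a; first lia.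
    exact: mo1 Ha.
  + move=> e c; rewrite !sH upd_other //; split=> -[a ha Ha]; exists a => //; move: Ha.
    * by rewrite updC // in1.
    * by rewrite updC // in1.
Qed.

Lemma forallpart k F : isPi k F -> forall m, k = m.+2 -> forall X Y, X != Y -> mv F <= X -> mv F <= Y ->
 exists G, [/\ isPi m G, (forall e, sat e F <-> forall x, exists y, sat (upd (upd e X x) Y y) G) &
   (forall e x y x' y', x' <= x -> y <= y' -> sat (upd (upd e X x) Y y) G -> sat (upd (upd e X x') Y y') G)].
Proof.
elim => [f d m Em|k0 f hs m [Em]|k0 v F1 hF1 IH m [Em]] X Y XY hX hY.
- by case: Em.
- have [H [pH sH mH iH]] := expart hs Em XY hX hY.
  have EQ : forall e x y, sat (upd (upd e X x) Y y) H <-> sat (upd e Y y) H.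
    by move=> e x y; rewrite updC // iH.
  exists H; split => //.
  + move=> e; rewrite sH; split.
    * by case=> y Hy x; exists y; apply/EQ.
    * by move=> /(_ 0) [y /EQ Hy]; exists y.
  + move=> e x y x' y' _ hy /EQ Hy; apply/EQ; exact: mH Hy.
- have hX1 : mv F1 <= X by move: hX => /= hX; lia.
  have hY1 : mv F1 <= Y by move: hY => /= hY; lia.
  have vX : v != X by apply/eqP; move: hX => /= hX; lia.
  have vY : v != Y by apply/eqP; move: hY => /= hY; lia.
  have Yv : Y != v by rewrite eq_sym.
  have Xv : X != v by rewrite eq_sym.
  have YX : Y != X by rewrite eq_sym.
  have [G1 [p1 s1 mo1]] := IH m (congr1 succn Em) X Y XY hX1 hY1.
  have [[G [pG _] sG] _] := (core G1 m v X).1 p1.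
  have Eenv : forall e x y a, upd (upd (upd e X x) Y y) v a = upd (upd (upd e v a) X x) Y y.
    by move=> e x y a; rewrite (updC _ _ _ Yv) (updC _ _ _ Xv).
  have EG : forall e x y, sat (upd (upd e X x) Y y) G <->
       forall a, a < x -> sat (upd (upd (upd e v a) X x) Y y) G1.
    move=> e x y; rewrite sG upd_other // updE; split=> H a ha; have := H a ha; by rewrite Eenv.
  have mono : forall e a x y x' y', x' <= x -> y <= y' ->
      sat (upd (upd (upd e v a) X x) Y y) G1 -> sat (upd (upd (upd e v a) X x') Y y') G1.
    by move=> e a x y x' y' hx hy; apply: mo1.
  exists G; split => //.
  + move=> e /=; split.
    * move=> H x.
      have H' : forall a x, exists y, sat (upd (upd (upd e v a) X x) Y y) G1.
        by move=> a; apply/s1; apply: H.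
      have [y Hy] := (L4 (mono e)).1 H' x.
      by exists y; apply/EG.
    * move=> H a; apply/s1.
      have H' : forall x, exists y, forall a, a < x -> sat (upd (upd (upd e v a) X x) Y y) G1.
        by move=> x; have [y Hy] := H x; exists y; apply/EG.
      exact: (L4 (mono e)).2 H' a.
  + move=> e x y x' y' hx hy /EG Hg; apply/EG => a ha.
    by apply: (mono e a x y) => //; apply: Hg; lia.
Qed.

Definition StepSpec m L F G := isPi m G /\ forall e, (forall j, L <= j -> e j = 0) ->
  (sat e F <-> forall x, exists y, sat (upd (upd e L x) L.+1 y) G) /\
  (forall x y x' y', x' <= x -> y <= y' -> sat (upd (upd e L x) L.+1 y) G ->
     sat (upd (upd e L x') L.+1 y') G).

Definition sig (L X j : nat) := if j < L then j else if j == X then L else if j == X.+1 then L.+1 else j + X.+2.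

Lemma sig_inj L X : L <= X -> injective (sig L X).
Proof.
  move=> hLX i j; rewrite /sig; repeat first [case: ltnP => ? | case: eqP => ?]; lia.
Qed.

Lemma sig_env (e : nat -> nat) L X x y : L <= X -> (forall j, L <= j -> e j = 0) ->
  (upd (upd e L x) L.+1 y) \o sig L X = upd (upd e X x) X.+1 y.
Proof.
move=> hLX ez; apply: functional_extensionality => j; rewrite /= /sig /upd.
case: (ltnP j L) => h1; case: (eqVneq j X) => h2; case: (eqVneq j X.+1) => h3;
  repeat case: eqP => ?; try done; try (exfalso; lia).
all: rewrite ?ez; try lia.
Qed.

Lemma step m L F : isPi m.+2 F -> exists G, StepSpec m L F G.
Proof.
move=> hF.
have [X [hX1 hX2]] : exists X, mv F <= X /\ L <= X by exists (mv F + L); lia.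
have XY : X != X.+1 by apply/eqP; lia.
have [G0 [p0 s0 m0]] := forallpart hF (erefl _) XY hX1 (leq_trans hX1 (leqnSn X)).
pose s := sig L X.
have sinj : injective s := sig_inj hX2.
exists (sren s G0); split; first exact: (ren_class s).1.
move=> e ez.
have Eenv : forall x y, (upd (upd e L x) L.+1 y) \o s = upd (upd e X x) X.+1 y.
  by move=> x y; apply: sig_env.
have ES : forall x y, sat (upd (upd e L x) L.+1 y) (sren s G0) <-> sat (upd (upd e X x) X.+1 y) G0.
  by move=> x y; rewrite sat_ren // Eenv.
split.
- rewrite s0; split=> H x; have [y Hy] := H x; exists y; by apply/ES.
- move=> x y x' y' hx hy /ES H; apply/ES; exact: m0 H.
Qed.

Definition stepF m L F := epsilon (inhabits F) (fun G => StepSpec m L F G).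

Fixpoint fam n f d := match d with
  | 0 => f
  | d.+1 => stepF (2 * (n - d.+1) - 3) (1 + 2 * d) (fam n f d) end.

Lemma fam_pi n f : isPi (2 * n - 3) f -> forall d, d <= n - 2 -> isPi (2 * (n - d) - 3) (fam n f d).
Proof.
move=> hf; elim => [|d IH] hd; first by rewrite subn0.
have hp := IH (ltnW hd).
rewrite (_ : 2 * (n - d) - 3 = (2 * (n - d.+1) - 3).+2) in hp; last lia.
have := epsilon_spec (inhabits (fam n f d)) (fun G => StepSpec (2 * (n - d.+1) - 3) (1 + 2 * d) (fam n f d) G) (step _ hp).
by case.
Qed.

Lemma fam_spec n f : isPi (2 * n - 3) f -> forall d, d.+1 <= n - 2 ->
  StepSpec (2 * (n - d.+1) - 3) (1 + 2 * d) (fam n f d) (fam n f d.+1).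
Proof.
move=> hf d hd; have hp := fam_pi hf (ltnW hd).
rewrite (_ : 2 * (n - d) - 3 = (2 * (n - d.+1) - 3).+2) in hp; last lia.
exact: (epsilon_spec (inhabits (fam n f d)) (fun G => StepSpec (2 * (n - d.+1) - 3) (1 + 2 * d) (fam n f d) G) (step _ hp)).
Qed.

Lemma env_cat (xbar : seq nat) L x y : size xbar = L ->
  (fun j => nth 0 (xbar ++ [:: x; y]) j) = upd (upd (fun j => nth 0 xbar j) L x) L.+1 y.
Proof.
move=> sz; apply: functional_extensionality => j; rewrite /upd nth_cat sz.
case: (ltnP j L) => h1.
- rewrite (_ : (j == L.+1) = false); last by apply/eqP; lia.
  by rewrite (_ : (j == L) = false) //; apply/eqP; lia.
- rewrite (nth_default 0 (_ : size xbar <= j)); last by rewrite sz.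
  case E: (j - L) => [|[|k]] /=.
  + rewrite (_ : (j == L.+1) = false); last by apply/eqP; lia.
    by rewrite (_ : (j == L) = true) //; apply/eqP; lia.
  + by rewrite (_ : (j == L.+1) = true) //; apply/eqP; lia.
  + rewrite (_ : (j == L.+1) = false); last by apply/eqP; lia.
    by rewrite (_ : (j == L) = false) ?nth_nil //; apply/eqP; lia.
Qed.

Unset Implicit Arguments.

Theorem lemma3 (n : nat) (Pn : seq nat -> Prop) :
  2 <= n ->
  Pi0_pred (2 * n - 3) 1 Pn ->
  exists Pfam : nat -> seq nat -> Prop,
    (forall v, Pfam n v <-> Pn v) /\
    (forall i, 2 <= i < n -> Pi0_pred (2 * i - 3) (1 + 2 * (n - i)) (Pfam i)) /\
    (forall i, 2 <= i < n ->
       forall xbar : seq nat, positive_args (1 + 2 * (n - i - 1)) xbar ->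
         (Pfam i.+1 xbar <->
            (forall x, 0 < x -> exists2 y, 0 < y & Pfam i (xbar ++ [:: x; y])))
         /\
         (forall x, 0 < x ->
            (forall y, 0 < y -> ~ Pfam i (xbar ++ [:: x; y])) ->
            forall x', x <= x' -> forall y, 0 < y -> ~ Pfam i (xbar ++ [:: x'; y]))).
Proof.
move=> hn [f [hf Hf]].
exists (fun i v => if i == n then Pn v else sat (fun j => nth 0 v j) (fam n f (n - i))).
split; first by move=> v; rewrite eqxx.
have spec : forall i, 2 <= i < n -> StepSpec (2 * i - 3) (1 + 2 * (n - i - 1))
     (fam n f (n - i - 1)) (fam n f (n - i)).
  move=> i /andP [hi1 hi2].
  have hd : (n - i - 1).+1 <= n - 2 by lia.
  have := fam_spec hf hd.
  rewrite (_ : (n - i - 1).+1 = n - i); last lia.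
  by rewrite (_ : n - (n - i) = i); last lia.
split.
- move=> i hi; have [pG _] := spec i hi.
  have ni : (i == n) = false by apply/eqP; move/andP: hi => [_ h]; lia.
  by exists (fam n f (n - i)); split => // v _; rewrite ni.
- move=> i hi xbar [sz pos]; have [_ HG] := spec i hi.
  have ni : (i == n) = false by apply/eqP; move/andP: hi => [_ h]; lia.
  set L := 1 + 2 * (n - i - 1).
  set e := fun j => nth 0 xbar j.
  have ez : forall j, L <= j -> e j = 0.
    by move=> j hj; rewrite /e nth_default // sz.
  have [Hiff Hmono] := HG e ez.
  set G := fam n f (n - i).
  have EP : forall x y, (if i == n then Pn (xbar ++ [:: x; y])
         else sat (fun j => nth 0 (xbar ++ [:: x; y]) j) G) <-> sat (upd (upd e L x) L.+1 y) G.
    by move=> x y; rewrite ni (@env_cat xbar L x y sz).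
  have EF : (if i.+1 == n then Pn xbar else sat (fun j => nth 0 xbar j) (fam n f (n - i.+1)))
       <-> sat e (fam n f (n - i - 1)).
    case: (eqVneq i.+1 n) => [Ein|Ein].
    + rewrite (_ : n - i - 1 = 0) /=; last lia.
      apply: Hf; split => //.
      rewrite sz; move: Ein => /eqP Ein; lia.
    + by rewrite subnS subn1.
  cbv beta; split.
  + apply: (iff_trans EF); apply: (iff_trans Hiff); apply: (iff_trans (L5 Hmono)).
    split=> H x hx; have [y hy Hy] := H x hx; exists y => //.
    * by apply/EP.
    * by move/EP: Hy.
  + move=> x hx H xq hxx y hy Hp; apply (H y hy).
    apply/EP; move/EP: Hp => Hp; exact: (Hmono xq y x y hxx (leqnn y) Hp).
Qed.
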